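(* For the population protocol USD and every $t\ge1$: (1) $\mathbb E_{t-1}[\psi_t]\le\psi_{t-1}\big(1-\frac1n\big)+\frac{\beta_{t-1}-\gamma_{t-1}}{n^2}$. (2) Conditioned on $\mathcal F_{t-1}$, $\psi_t-\mathbb E_{t-1}[\psi_t]$ satisfies the $\big(\frac{150}{n},\frac{150\beta_{t-1}}{n^2}\big)$-Bernstein condition.
   Context: Vertex set $V$, $|V|=n$; opinions in $\Sigma=[k]\cup\{\bot\}$ ($\bot$ = undecided). USD update rule: $\mathsf{update}(\sigma_1,\sigma_2)=\bot$ if $\sigma_1,\sigma_2\in[k]$ and $\sigma_1\ne\sigma_2$; $=\sigma_2$ if $\sigma_1=\bot$; $=\sigma_1$ otherwise. Population protocol USD: given $\mathrm{opn}_t\in\Sigma^V$, an ordered pair $(u,v)$ is chosen uniformly from $V\times V$ (with replacement), $\mathrm{opn}_{t+1}(u)=\mathsf{update}(\mathrm{opn}_t(u),\mathrm{opn}_t(v))$, and all other vertices keep their opinions. Notation: $\alpha_t(i)=|\{u:\mathrm{opn}_t(u)=i\}|/n$, $\beta_t=\sum_{i\in[k]}\alpha_t(i)$, $\gamma_t=\sum_{i\in[k]}\alpha_t(i)^2$, $\psi_t=\beta_t(2\beta_t-1)-\gamma_t$. $(\mathcal F_t)$ is the natural filtration; $\mathbb E_{t-1}$ is conditional expectation given $\mathcal F_{t-1}$. Bernstein condition: for $D,s\ge0$, $X$ satisfies the $(D,s)$-Bernstein condition if $\mathbb E[e^{\lambda X}]\le\exp\!\big(\frac{\lambda^2 s/2}{1-|\lambda|D/3}\big)$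 for all real $\lambda$ with $|\lambda|D<3$. Conditioned on $\mathcal F_{t-1}$: the same with $\mathbb E_{t-1}$, almost surely. *)

(* Defs.v *)
From HB Require Import structures.
From mathcomp Require Import all_boot all_order all_algebra.
From mathcomp Require Import reals.
From mathcomp Require Import sequences exp.
Set Implicit Arguments. Unset Strict Implicit. Unset Printing Implicit Defensive.
Import Order.TTheory GRing.Theory Num.Theory.
Local Open Scope ring_scope.

Section USD.
Variables (R : realType) (V : finType) (k : nat).

(* Opinions: Some i for i in [k], None for the undecided opinion bot. *)
Definition opinion := option 'I_k.
Definition config := V -> opinion.

Definition update (s1 s2 : opinion) : opinion :=
  match s1, s2 with
  | Some i, Some j => if i == j then s1 else None
  | None, _ => s2
  | Some _, None => s1
  end.

Definition step (c : config) (p : V * V) : config :=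
  fun w => if w == p.1 then update (c p.1) (c p.2) else c w.

Definition traj (c0 : config) (h : seq (V * V)) : config := foldl step c0 h.

Definition nV : R := #|V|%:R.

Definition alpha (c : config) (i : 'I_k) : R :=
  #|[pred u | c u == Some i]|%:R / nV.
Definition beta (c : config) : R := \sum_(i < k) alpha c i.
Definition gamma (c : config) : R := \sum_(i < k) alpha c i ^+ 2.
Definition psi (c : config) : R := beta c * (2 * beta c - 1) - gamma c.

(* Conditional expectation E_{t-1} given the history h = (pairs chosen at
   times 1..t-1): the t-th pair is uniform on V x V, independent of h. *)
Definition condE (f : V * V -> R) : R :=
  (nV ^+ 2)^-1 * \sum_(p : V * V) f p.

End USD.

Definition bernstein {R : realType} {T : Type} (E : (T -> R) -> R)
  (X : T -> R) (D s : R) : Prop :=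
  forall lam : R, `|lam| * D < 3 ->
    E (fun w => expR (lam * X w)) <=
    expR ((lam ^+ 2 * s / 2) / (1 - `|lam| * D / 3)).

(* Main.v *)
Require Import Defs.
From HB Require Import structures.
From mathcomp Require Import all_boot all_order all_algebra.
From mathcomp Require Import reals.
From mathcomp Require Import sequences exp.
From mathcomp Require Import ring lra.
From Stdlib Require Import FunctionalExtensionality.
Import Order.TTheory GRing.Theory Num.Theory.
Local Open Scope ring_scope.

Lemma expR_quad (R : realType) (y : R) : `|y| <= 1/4 -> expR y <= 1 + y + y ^+ 2.
Proof.
rewrite ler_norml => /andP[hy1 hy2].
have w0 := expR_gt0 (y / 2).
have e1 : expR (y/2) * expR (- (y/2)) = 1 by rewrite expRxMexpNx_1.
have e2 := expR_ge1Dx (- (y/2)).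
have ey : expR y = expR (y/2) ^+ 2 by rewrite -expRM_natr; congr expR; field.
rewrite ey.
move: w0 e1 e2; set w := expR (y/2); set z := expR (- (y/2)) => w0 e1 e2.
have hw : w * (1 - y/2) <= 1 by nra.
have hw0 : 0 <= w * (1 - y/2) by apply: mulr_ge0; lra.
have h5 : 0 <= y^+2 * (1 - 3*y + y^+2) by apply: mulr_ge0; [exact: sqr_ge0| nra].
have h3 : 1 <= (1 + y + y^+2) * (1 - y/2)^+2.
  have -> : (1 + y + y^+2) * (1 - y/2)^+2 = 1 + y^+2 * (1 - 3*y + y^+2) / 4 by field.
  lra.
have h4 : (w * (1 - y/2))^+2 <= 1.
  by rewrite expr2; have := ler_pM hw0 hw0 hw hw; rewrite mulr1.
have hp : 0 < (1 - y/2)^+2 by apply: exprn_gt0; lra.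
rewrite -(ler_pM2r hp); rewrite -exprMn; lra.
Qed.

Section S.
Variables (R : realType) (V : finType) (k : nat).
Hypothesis hV : (0 < #|V|)%N.

Local Notation n := (nV R V).
Local Notation m := (nV R V)^-1.

Definition E (c : config V k) (i : 'I_k) (u : V) : R := if c u == Some i then 1 else 0.
Definition S (c : config V k) (v : V) : R := \sum_(j < k) E c j v.

Lemma n_gt0 : 0 < n.
Proof. by rewrite /nV ltr0n. Qed.
Lemma n_neq0 : n != 0.
Proof. by rewrite gt_eqF // n_gt0. Qed.

Lemma sumE c i : \sum_u E c i u = n * alpha R c i.
Proof.
rewrite /alpha mulrC divfK ?n_neq0 // -sum1_card natr_sum [RHS]big_mkcond /=.
by apply: eq_bigr => u _; rewrite /E inE.
Qed.

Lemma sum_if (X : 'I_k -> R) j : \sum_(i < k) (if i == j then X i else 0) = X j.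
Proof. by rewrite -big_mkcond big_pred1_eq. Qed.

Lemma S_some {c v y} : c v = Some y -> S c v = 1.
Proof.
move=> cv; rewrite /S -(sum_if (fun _ => 1) y); apply: eq_bigr => i _.
by rewrite /E cv; case: eqP => [[->]|]; case: eqP => // ->.
Qed.

Lemma S_none {c v} : c v = None -> S c v = 0.
Proof. by move=> cv; rewrite /S big1 // => i _; rewrite /E cv. Qed.

Lemma alpha_step c u v i :
  alpha R (step c (u, v)) i = alpha R c i +
    ((if update (c u) (c v) == Some i then 1 else 0) - E c i u) * m.
Proof.
have h1 : forall c', alpha R c' i = (\sum_w E c' i w) * m.
  by move=> c'; rewrite sumE mulrC mulKf ?n_neq0.
rewrite !h1 -mulrDl; congr (_ * _).
rewrite (bigD1 u) //= [in RHS](bigD1 u) //=.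
have -> : \sum_(w | w != u) E (step c (u, v)) i w = \sum_(w | w != u) E c i w.
  by apply: eq_bigr => w wu; rewrite /E /step /= (negbTE wu).
rewrite /E /step /= eqxx.
set x := (if update _ _ == _ then _ else _); set y := (if c u == _ then _ else _); set s := \sum_(w | _) _; ring.
Qed.

Lemma psi_eq (c c' : config V k) : (forall i, alpha R c' i = alpha R c i) -> psi R c' = psi R c.
Proof.
move=> h; rewrite /psi /beta /gamma.
by under eq_bigr do rewrite h; under [X in _ - X]eq_bigr do rewrite h.
Qed.

Lemma psi_shift (c c' : config V k) j (D : R) :
  (forall i, alpha R c' i = alpha R c i + (if i == j then D * m else 0)) ->
  psi R c' = psi R c + D * (4 * beta R c - 1 - 2 * alpha R c j) * m + D^+2 * m^+2.
Proof.
move=> h.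
have hb : beta R c' = beta R c + D * m.
  by rewrite /beta; under eq_bigr do rewrite h; rewrite big_split /= sum_if.
have hg : gamma R c' = gamma R c + (2 * alpha R c j * (D * m) + (D * m)^+2).
  rewrite /gamma.
  under eq_bigr => i _ do rewrite h.
  have -> : \sum_(i < k) (alpha R c i + (if i == j then D * m else 0)) ^+ 2 =
     \sum_(i < k) (alpha R c i ^+2 + (if i == j then 2 * alpha R c i * (D * m) + (D * m)^+2 else 0)).
    by apply: eq_bigr => i _; case: eqP => _; ring.
  by rewrite big_split /= sum_if.
rewrite /psi hb hg; ring.
Qed.


Definition K (c : config V k) i : R := 4 * beta R c - 1 - 2 * alpha R c i.
Definition C1 c i : R := - K c i * m + m ^+ 2.
Definition C2 c i : R := K c i * m + m ^+ 2.
Definition Y (c : config V k) (p : V * V) : R :=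
  \sum_(i < k) (E c i p.1 * (S c p.2 - E c i p.2) * C1 c i
                + (1 - S c p.1) * E c i p.2 * C2 c i).

Lemma E_some {c v y} : c v = Some y -> forall i, E c i v = if i == y then 1 else 0.
Proof. by move=> cv i; rewrite /E cv; case: eqP => [[->]|]; case: eqP => // ->. Qed.
Lemma E_none {c v} : c v = None -> forall i, E c i v = 0.
Proof. by move=> cv i; rewrite /E cv. Qed.

Lemma eqSome (x i : 'I_k) : (Some x == Some i) = (i == x).
Proof. by apply/eqP/eqP => [[->]|->]. Qed.

Lemma Ycases (c : config V k) u v :
  psi R (step c (u,v)) = psi R c + Y c (u,v) /\
  (Y c (u,v) = 0 \/ (S c v = 1 /\ exists j, Y c (u,v) = C1 c j \/ Y c (u,v) = C2 c j)).
Proof.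
rewrite /Y /=.
case eu: (c u) => [x|]; case ev: (c v) => [y|].
- have [exy|xy] := eqVneq x y; first subst y.
  + have -> : \sum_(i < k) (E c i u * (S c v - E c i v) * C1 c i
                + (1 - S c u) * E c i v * C2 c i) = 0.
      rewrite big1 // => i _; rewrite (S_some ev) (S_some eu) (E_some eu) (E_some ev).
      by case: eqP => _; ring.
    split; last by left.
    rewrite addr0; apply: psi_eq => i; by rewrite alpha_step eu ev /= eqxx (E_some eu) eqSome subrr mul0r addr0.
  + have -> : \sum_(i < k) (E c i u * (S c v - E c i v) * C1 c i
                + (1 - S c u) * E c i v * C2 c i) = C1 c x.
      rewrite -(sum_if (C1 c) x); apply: eq_bigr => i _.
      rewrite (S_some ev) (S_some eu) (E_some eu) (E_some ev).
      have [->|ix] := eqVneq i x; first by rewrite (negbTE xy); ring.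
      by rewrite !mul0r subrr !mul0r addr0.
    split; last by right; split; [exact: S_some ev| exists x; left].
    rewrite (@psi_shift c _ x (-1)); first by rewrite /C1 /K; ring.
    move=> i; rewrite alpha_step eu ev /= (negbTE xy) (E_some eu).
    by case: (i == x) => /=; ring.
- have -> : \sum_(i < k) (E c i u * (S c v - E c i v) * C1 c i
                + (1 - S c u) * E c i v * C2 c i) = 0.
    rewrite big1 // => i _; rewrite (S_none ev) (S_some eu) (E_none ev).
    ring.
  split; last by left.
  rewrite addr0; apply: psi_eq => i; rewrite alpha_step eu ev /=.
  by rewrite (E_some eu) eqSome subrr mul0r addr0.
- have -> : \sum_(i < k) (E c i u * (S c v - E c i v) * C1 c i
                + (1 - S c u) * E c i v * C2 c i) = C2 c y.
    rewrite -(sum_if (C2 c) y); apply: eq_bigr => i _.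
    rewrite (S_some ev) (S_none eu) (E_none eu) (E_some ev).
    by case: eqP => _; ring.
  split; last by right; split; [exact: S_some ev| exists y; right].
  rewrite (@psi_shift c _ y 1); first by rewrite /C2 /K; ring.
  move=> i; rewrite alpha_step eu ev /= (E_none eu).
  by rewrite eqSome; case: (i == y) => /=; ring.
- have -> : \sum_(i < k) (E c i u * (S c v - E c i v) * C1 c i
                + (1 - S c u) * E c i v * C2 c i) = 0.
    by rewrite big1 // => i _; rewrite (E_none ev) (E_none eu); ring.
  split; last by left.
  rewrite addr0; apply: psi_eq => i; rewrite alpha_step eu ev /=.
  by rewrite (E_none eu) subrr mul0r addr0.
Qed.


Lemma sum_constV (x : R) : \sum_(v : V) x = x * n.
Proof. by rewrite sumr_const -mulr_natr. Qed.

Lemma sum_constP (x : R) : \sum_(p : V * V) x = x * n ^+ 2.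
Proof. by rewrite sumr_const card_prod -mulr_natr natrM expr2. Qed.

Lemma sumS (c : config V k) : \sum_v S c v = n * beta R c.
Proof.
rewrite /S exchange_big /=; under eq_bigr do rewrite sumE.
by rewrite /beta mulr_sumr.
Qed.

Lemma lin2 (A B : R) (f g : V -> R) :
  \sum_v (A * f v + B * g v) = A * \sum_v f v + B * \sum_v g v.
Proof. by rewrite big_split /= -!mulr_sumr. Qed.

Definition T (c : config V k) i : R :=
  alpha R c i * (beta R c - alpha R c i) * C1 c i + (1 - beta R c) * alpha R c i * C2 c i.

Lemma sumY (c : config V k) : \sum_(p : V * V) Y c p = n ^+ 2 * \sum_(i < k) T c i.
Proof.
transitivity (\sum_u \sum_v Y c (u, v)); first by rewrite [RHS]pair_bigA.
rewrite /Y /=.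
under eq_bigr do rewrite exchange_big.
rewrite exchange_big /= mulr_sumr; apply: eq_bigr => i _.
have inner u : \sum_v (E c i u * (S c v - E c i v) * C1 c i
                + (1 - S c u) * E c i v * C2 c i)
   = (E c i u * C1 c i) * (n * beta R c - n * alpha R c i) + ((1 - S c u) * C2 c i) * (n * alpha R c i).
  transitivity (\sum_v ((E c i u * C1 c i) * (S c v - E c i v) + ((1 - S c u) * C2 c i) * E c i v)).
    by apply: eq_bigr => v _; ring.
  by rewrite lin2 sumrB sumS sumE.
under eq_bigr do rewrite inner.
transitivity (\sum_u ((C1 c i * (n * beta R c - n * alpha R c i)) * E c i u
                + (C2 c i * (n * alpha R c i)) * (1 - S c u))).
  by apply: eq_bigr => u _; ring.
rewrite lin2 sumrB sumE sumS sum_constV /T; ring.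
Qed.

Lemma alpha_ge0 (c : config V k) i : 0 <= alpha R c i.
Proof. by rewrite /alpha divr_ge0 // /nV ler0n. Qed.

Lemma psiE (c : config V k) :
  psi R c = \sum_i alpha R c i * (2 * beta R c - 1 - alpha R c i).
Proof.
set b := beta R c.
transitivity (\sum_i (alpha R c i * (2 * b - 1) - alpha R c i ^+ 2)); last first.
  by apply: eq_bigr => i _; ring.
by rewrite sumrB -mulr_suml.
Qed.

Lemma comb (f g h l : 'I_k -> R) (x y : R) :
  \sum_i f i + x * \sum_i g i - y * (\sum_i h i - \sum_i l i) =
  \sum_i (f i + x * g i - y * (h i - l i)).
Proof. by rewrite !sumrB big_split /= -!mulr_sumr -sumrB. Qed.

Lemma part1 (c : config V k) :
  @condE R V (fun p => psi R (step c p)) <=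
  psi R c * (1 - m) + (beta R c - gamma R c) / n ^+ 2.
Proof.
rewrite /condE.
have -> : \sum_p psi R (step c p) = \sum_(p : V * V) (psi R c + Y c p).
  by apply: eq_bigr => -[u v] _; case: (Ycases c u v).
rewrite big_split /= sum_constP sumY.
have nn := n_neq0.
rewrite -subr_le0.
have -> : (n ^+ 2)^-1 * (psi R c * n ^+ 2 + n ^+ 2 * \sum_i T c i) -
   (psi R c * (1 - m) + (beta R c - gamma R c) / n ^+ 2) =
   \sum_i T c i + m * psi R c - m ^+ 2 * (beta R c - gamma R c).
  by field.
rewrite [X in _ + _ * X - _]psiE [in X in _ - X]/beta /gamma comb.
apply: sumr_le0 => i _.
have -> : T c i + m * (alpha R c i * (2 * beta R c - 1 - alpha R c i)) -
     m ^+ 2 * (alpha R c i - alpha R c i ^+ 2) =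
     - (2 * m * alpha R c i * (2 * beta R c - 1 - alpha R c i) ^+ 2).
  by rewrite /T /C1 /C2 /K; ring.
have m0 : 0 <= m by rewrite invr_ge0 /nV ler0n.
by rewrite oppr_le0 mulr_ge0 ?sqr_ge0 // mulr_ge0 ?alpha_ge0 // mulr_ge0.
Qed.


Lemma m_gt0 : 0 < m.
Proof. by rewrite invr_gt0 n_gt0. Qed.

Lemma m_le1 : m <= 1.
Proof. by rewrite invf_le1 ?n_gt0 // /nV ler1n. Qed.

Lemma S_bounds (c : config V k) v : 0 <= S c v <= 1.
Proof. by case ev: (c v) => [y|]; rewrite ?(S_some ev) ?(S_none ev) ?lexx ?ler01. Qed.

Lemma beta_le1 (c : config V k) : beta R c <= 1.
Proof.
have h : \sum_v S c v <= \sum_(v : V) (1 : R).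
  by apply: ler_sum => v _; case/andP: (S_bounds c v).
rewrite sumS sum_constV mul1r -{2}(mulr1 n) in h.
by rewrite -(ler_pM2l n_gt0).
Qed.

Lemma alpha_le_beta (c : config V k) j : alpha R c j <= beta R c.
Proof.
rewrite /beta (bigD1 j) //= lerDl sumr_ge0 // => i _; exact: alpha_ge0.
Qed.

Lemma beta_ge0 (c : config V k) : 0 <= beta R c.
Proof. by rewrite /beta sumr_ge0 // => i _; exact: alpha_ge0. Qed.

Lemma Ysq (c : config V k) p : Y c p ^+ 2 <= 16 * m ^+ 2 * S c p.2.
Proof.
case: p => u v /=.
have hm0 := m_gt0; have hm1 := m_le1.
have hb0 := beta_ge0 c; have hb1 := beta_le1 c.
case: (Ycases c u v) => _ [->| [-> [j [->|->]]]].
  rewrite expr0n /=; case/andP: (S_bounds c v) => s0 _; rewrite mulr_ge0 // mulr_ge0 // sqr_ge0 //.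
- have ha0 := alpha_ge0 c j; have ha1 := alpha_le_beta c j.
  have h1 : (m - K c j) ^+ 2 <= 16.
    have h2 : -4 <= m - K c j <= 4 by rewrite /K; apply/andP; split; lra.
    case/andP: h2 => h2 h3; nra.
  have -> : C1 c j = m * (m - K c j) by rewrite /C1; ring.
  rewrite mulr1 exprMn mulrC ler_wpM2r ?sqr_ge0 //.
- have ha0 := alpha_ge0 c j; have ha1 := alpha_le_beta c j.
  have h1 : (m + K c j) ^+ 2 <= 16.
    have h2 : -4 <= m + K c j <= 4 by rewrite /K; apply/andP; split; lra.
    case/andP: h2 => h2 h3; nra.
  have -> : C2 c j = m * (m + K c j) by rewrite /C2; ring.
  rewrite mulr1 exprMn mulrC ler_wpM2r ?sqr_ge0 //.
Qed.

Lemma Yabs (c : config V k) p : `|Y c p| <= 4 * m.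
Proof.
have h := Ysq c p; have hm0 := m_gt0.
case/andP: (S_bounds c p.2) => s0 s1.
have h' : Y c p ^+ 2 <= 16 * m ^+ 2 by apply: (le_trans h); rewrite ler_piMr // mulr_ge0 // sqr_ge0.
rewrite ler_norml; apply/andP; split; nra.
Qed.


Lemma part2 (c : config V k) :
  let Et := @condE R V (fun p => psi R (step c p)) in
  bernstein (@condE R V) (fun p => psi R (step c p) - Et)
       (150 / n) (150 * beta R c / n ^+ 2).
Proof.
move=> Et lam hlam.
have nn := n_neq0; have hm0 := m_gt0.
set mu := (n ^+ 2)^-1 * \sum_p Y c p.
have hX : forall p, psi R (step c p) - Et = Y c p - mu.
  move=> [u v]; rewrite /Et /condE.
  have -> : \sum_p psi R (step c p) = \sum_(p : V * V) (psi R c + Y c p).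
    by apply: eq_bigr => -[u' v'] _; case: (Ycases c u' v').
  rewrite big_split /= sum_constP /mu; case: (Ycases c u v) => -> _; by field.
have hsumY : \sum_p Y c p = n ^+ 2 * mu by rewrite /mu mulrA mulfV ?mul1r // expf_neq0.
have hmu : `|mu| <= 4 * m.
  rewrite /mu normrM normfV normrX (ger0_norm (ltW n_gt0)).
  rewrite ler_pdivrMl ?exprn_gt0 ?n_gt0 //.
  apply: (le_trans (ler_norm_sum _ _ _)).
  apply: (le_trans (ler_sum _ (fun p _ => Yabs c p))).
  by rewrite sum_constP mulrC.
have hXb : forall p, `|lam * (Y c p - mu)| <= 1/4.
  move=> p; rewrite normrM.
  have h1 : `|Y c p - mu| <= 8 * m.
    apply: (le_trans (ler_normB _ _)); have := Yabs c p; lra.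
  have h2 : `|lam| * m < 1/50.
    lra.
  have h3 : 0 <= `|lam| := normr_ge0 lam.
  have h4 : 0 <= `|Y c p - mu| := normr_ge0 _.
  nra.
rewrite /condE.
under eq_bigr do rewrite hX.
have step1 : \sum_p expR (lam * (Y c p - mu)) <=
    \sum_(p : V * V) (1 + lam * (Y c p - mu) + (lam * (Y c p - mu)) ^+ 2).
  by apply: ler_sum => p _; apply: expR_quad.
have hS1 : \sum_(p : V * V) (Y c p - mu) = 0.
  by rewrite sumrB hsumY sum_constP mulrC subrr.
have hS2 : \sum_(p : V * V) (Y c p - mu) ^+ 2 <= \sum_(p : V * V) Y c p ^+ 2.
  have -> : \sum_(p : V * V) (Y c p - mu) ^+ 2 = \sum_(p : V * V) (Y c p ^+ 2 + (- (2 * mu)) * Y c p + mu ^+ 2).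
    by apply: eq_bigr => p _; ring.
  rewrite !big_split /= -mulr_sumr hsumY sum_constP.
  have : 0 <= n ^+ 2 * mu ^+ 2 by rewrite mulr_ge0 ?sqr_ge0 // exprn_ge0 // ltW // n_gt0.
  lra.
have hS3 : \sum_(p : V * V) Y c p ^+ 2 <= 16 * m ^+ 2 * (n * (n * beta R c)).
  apply: (le_trans (ler_sum _ (fun p _ => Ysq c p))).
  have -> : \sum_(p : V * V) (16 * m ^+ 2 * S c p.2) = \sum_(u : V) \sum_(v : V) (16 * m ^+ 2 * S c (u, v).2).
    by rewrite [RHS]pair_bigA.
  rewrite /=; under eq_bigr do rewrite -mulr_sumr sumS.
  by rewrite -mulr_sumr sum_constV [n * beta R c * n]mulrC.
have hsum : \sum_(p : V * V) (1 + lam * (Y c p - mu) + (lam * (Y c p - mu)) ^+ 2)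
    = n ^+ 2 + lam * 0 + lam ^+ 2 * \sum_(p : V * V) (Y c p - mu) ^+ 2.
  rewrite !big_split /= sum_constP mul1r -mulr_sumr hS1 mulr_sumr.
  by congr (_ + _); apply: eq_bigr => p _; rewrite exprMn.
set x := 16 * lam ^+ 2 * m ^+ 2 * beta R c.
have hx0 : 0 <= x by rewrite /x mulr_ge0 ?beta_ge0 // mulr_ge0 ?sqr_ge0 // mulr_ge0 ?sqr_ge0.
apply: (le_trans (y := 1 + x)).
  rewrite -(ler_pM2l (exprn_gt0 2 n_gt0)) mulrA mulfV ?expf_neq0 // mul1r.
  apply: (le_trans step1); rewrite hsum mulr0 addr0.
  have hl2 : 0 <= lam ^+ 2 := sqr_ge0 lam.
  have : lam ^+ 2 * \sum_(p : V * V) (Y c p - mu) ^+ 2 <= lam ^+ 2 * (16 * m ^+ 2 * (n * (n * beta R c))).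
    by rewrite ler_wpM2l //; apply: le_trans hS2 hS3.
  have -> : n ^+ 2 * (1 + x) = n ^+ 2 + lam ^+ 2 * (16 * m ^+ 2 * (n * (n * beta R c))).
    by rewrite /x; field.
  lra.
apply: (le_trans (expR_ge1Dx x)); rewrite ler_expR.
have hq1 : 0 < 1 - `|lam| * (150 / n) / 3 by lra.
have hq2 : 1 - `|lam| * (150 / n) / 3 <= 1.
  have : 0 <= `|lam| * (150 / n) by rewrite mulr_ge0 // divr_ge0 // ltW // n_gt0.
  lra.
rewrite ler_pdivlMr //.
have -> : lam ^+ 2 * (150 * beta R c / n ^+ 2) / 2 = 75 / 16 * x by rewrite /x; field.
set q := 1 - _ in hq1 hq2 *.
nra.
Qed.

End S.

Theorem mainTheorem14 (R : realType) (V : finType) (k : nat)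
  (hV : (0 < #|V|)%N) (c0 : config V k) (t : nat) (ht : (1 <= t)%N)
  (h : seq (V * V)) (hh : size h = t.-1) :
  let n : R := nV R V in
  let c := traj c0 h in
  let psi_t := fun p : V * V => psi R (traj c0 (rcons h p)) in
  let Et := @condE R V psi_t in
  Et <= psi R c * (1 - n^-1) + (beta R c - gamma R c) / n ^+ 2
  /\ bernstein (@condE R V) (fun p => psi_t p - Et)
       (150 / n) (150 * beta R c / n ^+ 2).
Proof.
move=> n c psi_t Et.
have hpt : psi_t = (fun p => psi R (step c p)).
  by apply: functional_extensionality => p; rewrite /psi_t /traj foldl_rcons.
rewrite /Et hpt; split; first exact: part1.
exact: (@part2 R V k hV c).
Qed.
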